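(* Let $(X,\mathsf{d}_X)$ be a compact metric space and $\mathfrak{A}=\bigoplus_{k=0}^n M_{m_k}(\mathbb{C})$ ($n\in\mathbb{N}$, $m_k\ge1$). Let $\|\cdot\|_{\mathsf{n}}$ be a norm on $\mathfrak{A}$ (over $\mathbb{R}$ or $\mathbb{C}$) with $M,N>0$ such that $M\|\cdot\|_{\mathsf{n}}\le\|\cdot\|_{\mathfrak{A}}\le N\|\cdot\|_{\mathsf{n}}$. Let $v=(v_0,\dots,v_n)$ with $v_k\in[0,1]$, $\sum_kv_k=1$, and let $\mathsf{tr}^{\mathfrak{A}}_v$ be the state $(a^k)_k\mapsto\sum_{k=0}^n\frac{v_k}{m_k}\mathrm{Tr}(a^k)$. Then $\Delta:=\Delta^{\mathfrak{A}}_{\mathsf{tr}^{\mathfrak{A}}_v}:(X,\mathsf{d}_X)\to(\mathscr{S}(C(X,\mathfrak{A})),\mathrm{mk}_{\mathsf{L}^{(\mathsf{n}),q}_{\mathsf{d}_X}})$ is bi-Lipschitz; specifically, for all $x,y\in X$, writing $D=\mathrm{diam}(X,\mathsf{d}_X)$ and $m_q(x,y)=\mathrm{mk}_{\mathsf{L}^{(\mathsf{n}),q}_{\mathsf{d}_X}}(\Delta(x),\Delta(y))$: (1) if $q=C(X)$: $M\mathsf{d}_X(x,y)\le m_q(x,y)\le N\mathsf{d}_X(x,y)$; (2) if $q=\mathbb{C}$: (a) if $MD\le1$, $M\mathsf{d}_X(x,y)\le m_q(x,y)\le N\mathsf{d}_X(x,y)$; (b) if $MD>1$, $\frac1D\mathsf{d}_X(x,y)\le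 m_q(x,y)\le N\mathsf{d}_X(x,y)$; (3) if $q=\mu$ for a state $\mu$ of $C(X,\mathfrak{A})$: (a) if $2MD\le1$, $M\mathsf{d}_X(x,y)\le m_q(x,y)\le N\mathsf{d}_X(x,y)$; (b) if $2MD>1$, $\frac1{2D}\mathsf{d}_X(x,y)\le m_q(x,y)\le N\mathsf{d}_X(x,y)$.
   Context: For a state $\phi$ of $\mathfrak{A}$, $\Delta^{\mathfrak{A}}_\phi(x)$ is the state $a\mapsto\phi(a(x))$ of $C(X,\mathfrak{A})$ (continuous $\mathfrak{A}$-valued functions, supremum norm). $C(X,\mathbb{C}1_{\mathfrak{A}})$: $\mathbb{C}1_{\mathfrak{A}}$-valued functions. $l^{(\mathsf{n})}_{\mathsf{d}_X}(a)=\sup_{x\ne y}\|a(x)-a(y)\|_{\mathsf{n}}/\mathsf{d}_X(x,y)$; $\mathsf{L}^{(\mathsf{n}),C(X)}_{\mathsf{d}_X}(a)=\max\{l^{(\mathsf{n})}_{\mathsf{d}_X}(a),\inf_{b\in C(X,\mathbb{C}1_{\mathfrak{A}})}\|a-b\|\}$, $\mathsf{L}^{(\mathsf{n}),\mathbb{C}}_{\mathsf{d}_X}(a)=\max\{l^{(\mathsf{n})}_{\mathsf{d}_X}(a),\inf_{\lambda\in\mathbb{C}}\|a-\lambda1\|\}$, $\mathsf{L}^{(\mathsf{n}),\mu}_{\mathsf{d}_X}(a)=\max\{l^{(\mathsf{n})}_{\mathsf{d}_X}(a),\|a-\mu(a)1\|\}$. $\mathrm{mk}_{\mathsf{L}}(\varphi,\psi)=\sup\{|\varphi(a)-\psi(a)|:a=a^*,\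 \mathsf{L}(a)\le1\}$. $\mathrm{diam}(X,\mathsf{d}_X)=\sup_{x,y}\mathsf{d}_X(x,y)$. *)

(* Defs.v *)
From HB Require Import structures.
From mathcomp Require Import all_boot all_order all_algebra.
From mathcomp Require Import all_classical all_reals ereal.
From mathcomp Require Import complex.
Set Implicit Arguments. Unset Strict Implicit. Unset Printing Implicit Defensive.
Import Order.TTheory GRing.Theory Num.Theory.
Local Open Scope ring_scope.
Local Open Scope classical_set_scope.

Section Defs.
Variable R : realType.
Local Notation C := R[i].

Definition cabs (z : C) : R :=
  Num.sqrt (complex.Re z ^+ 2 + complex.Im z ^+ 2).
Definition rC (r : R) : C := Complex r 0.
Definition vnorm k (u : 'cV[C]_k) : R := Num.sqrt (\sum_i cabs (u i 0) ^+ 2).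
Definition opnorm k (A : 'M[C]_k) : R :=
  sup [set r | exists u : 'cV[C]_k, vnorm u <= 1 /\ r = vnorm (A *m u)].

Section Alg.
Variables (n : nat) (m : 'I_n.+1 -> nat).
Definition alg := forall k : 'I_n.+1, 'M[C]_(m k).
Definition alg_zero : alg := fun k => 0.
Definition alg_one : alg := fun k => 1%:M.
Definition alg_add (a b : alg) : alg := fun k => a k + b k.
Definition alg_sub (a b : alg) : alg := fun k => a k - b k.
Definition alg_mul (a b : alg) : alg := fun k => a k *m b k.
Definition alg_scale (c : C) (a : alg) : alg := fun k => c *: a k.
Definition alg_adj (a : alg) : alg := fun k => (map_mx conjc (a k))^T.
(* the C*-norm of A: maximum of the operator norms of the blocks *)
Definition alg_norm (a : alg) : R := \big[Num.max/0]_k opnorm (a k).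
Definition trv (v : 'I_n.+1 -> R) (a : alg) : C :=
  \sum_k rC (v k / (m k)%:R) * \tr (a k).
(* nn is a norm on A viewed as a real vector space (this covers norms over
   R as well as norms over C) *)
Definition is_alg_norm (nn : alg -> R) : Prop :=
  [/\ forall a, 0 <= nn a,
      forall a, nn a = 0 -> a = alg_zero,
      forall (r : R) a, nn (alg_scale (rC r) a) = `|r| * nn a &
      forall a b, nn (alg_add a b) <= nn a + nn b].
End Alg.

Section Metric.
Variables (X : Type) (d : X -> X -> R).
Definition is_metric : Prop :=
  [/\ forall x y, 0 <= d x y,
      forall x y, d x y = 0 <-> x = y,
      forall x y, d x y = d y x &
      forall x y z, d x z <= d x y + d y z].
Definition metric_open (U : set X) : Prop :=
  forall x, U x -> exists2 r : R, 0 < r & forall y, d x y < r -> U y.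
Definition metric_compact : Prop :=
  forall (I : Type) (U : I -> set X),
    (forall i, metric_open (U i)) -> (forall x, exists i, U i x) ->
    exists (k : nat) (f : 'I_k -> I), forall x, exists j, U (f j) x.
Definition diam : R := sup [set r | exists x y, r = d x y].

Variables (n : nat) (m : 'I_n.+1 -> nat).
Local Notation A := (alg m).
Definition cont (a : X -> A) : Prop :=
  forall x (e : R), 0 < e -> exists2 del : R, 0 < del &
    forall y, d x y < del -> alg_norm (alg_sub (a x) (a y)) < e.
Definition supnorm (a : X -> A) : \bar R :=
  ereal_sup [set r | exists x, r = (alg_norm (a x))%:E].
Definition lipc (nn : A -> R) (a : X -> A) : \bar R :=
  ereal_sup [set r | exists x y, x <> y /\
                     r = (nn (alg_sub (a x) (a y)) / d x y)%:E].
Definition L_CX (nn : A -> R) (a : X -> A) : \bar R :=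
  Order.max (lipc nn a)
    (ereal_inf [set r | exists b : X -> A,
        [/\ cont b, (forall x, exists l : C, b x = alg_scale l (alg_one m)) &
            r = supnorm (fun x => alg_sub (a x) (b x))]]).
Definition L_C (nn : A -> R) (a : X -> A) : \bar R :=
  Order.max (lipc nn a)
    (ereal_inf [set r | exists l : C,
        r = supnorm (fun x => alg_sub (a x) (alg_scale l (alg_one m)))]).
Definition L_mu (mu : (X -> A) -> C) (nn : A -> R) (a : X -> A) : \bar R :=
  Order.max (lipc nn a)
    (supnorm (fun x => alg_sub (a x) (alg_scale (mu a) (alg_one m)))).

(* states of C(X,A): positive linear functionals with mu(1) = 1
   (only their values on continuous functions matter) *)
Definition is_state (mu : (X -> A) -> C) : Prop :=
  [/\ forall a b, cont a -> cont b ->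
        mu (fun x => alg_add (a x) (b x)) = mu a + mu b,
      forall (c : C) a, cont a -> mu (fun x => alg_scale c (a x)) = c * mu a,
      forall a, cont a -> 0 <= mu (fun x => alg_mul (alg_adj (a x)) (a x)) &
      mu (fun _ => alg_one m) = 1].

Definition mk (L : (X -> A) -> \bar R) (phi psi : (X -> A) -> C) : \bar R :=
  ereal_sup [set r | exists a : X -> A,
     [/\ cont a, (forall x, alg_adj (a x) = a x), (L a <= 1)%E &
         r = (cabs (phi a - psi a))%:E]].

Definition Delta (phi : A -> C) (x : X) : (X -> A) -> C := fun a => phi (a x).
End Metric.
End Defs.

(* Main.v *)
Require Import Defs.
From HB Require Import structures.
From mathcomp Require Import all_boot all_order all_algebra.
From mathcomp Require Import all_classical all_reals ereal.
From mathcomp Require Import complex.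
From mathcomp Require Import lra.
Import Order.TTheory GRing.Theory Num.Theory.
Local Open Scope ring_scope.
Local Open Scope complex_scope.

Section H.
Variable R : realType.
Local Notation C := R[i].

Lemma cabsE (z : C) : (cabs z)%:C = `|z|.
Proof. by rewrite normc_def. Qed.

Lemma cabs_ge0 (z : C) : 0 <= cabs z.
Proof. exact: sqrtr_ge0. Qed.

Lemma cabs_le (z : C) r : (cabs z <= r) = (`|z| <= r%:C).
Proof. by rewrite -cabsE lecR. Qed.

Lemma cabsM (z w : C) : cabs (z * w) = cabs z * cabs w.
Proof. apply: complexI; by rewrite rmorphM /= !cabsE normrM. Qed.

Lemma cabsD (z w : C) : cabs (z + w) <= cabs z + cabs w.
Proof. by rewrite cabs_le rmorphD /= !cabsE ler_normD. Qed.

Lemma cabsN (z : C) : cabs (- z) = cabs z.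
Proof. apply: complexI; by rewrite !cabsE normrN. Qed.

Lemma cabs_rC (r : R) : cabs (rC r) = `|r|.
Proof. rewrite /cabs /rC /= expr0n /= addr0. exact: sqrtr_sqr. Qed.

Lemma rCE (r : R) : rC r = r%:C. Proof. by []. Qed.

Lemma cabs0 : cabs (0 : C) = 0.
Proof. by rewrite -[0 : C]/(rC 0) cabs_rC normr0. Qed.

Lemma cabs_sum I (r : seq I) (P : pred I) (F : I -> C) :
  cabs (\sum_(i <- r | P i) F i) <= \sum_(i <- r | P i) cabs (F i).
Proof.
elim/big_rec2: _ => [|i y z _ Hyz]; first by rewrite cabs0.
apply: le_trans (cabsD _ _) _; by rewrite lerD2l.
Qed.

Lemma vnorm_ge0 k (u : 'cV[C]_k) : 0 <= vnorm u.
Proof. exact: sqrtr_ge0. Qed.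

Lemma vnormZ k c (u : 'cV[C]_k) : vnorm (c *: u) = cabs c * vnorm u.
Proof.
rewrite /vnorm.
under eq_bigr => i _ do rewrite mxE cabsM exprMn.
rewrite -mulr_sumr sqrtrM ?sqr_ge0 // sqrtr_sqr ger0_norm //; exact: cabs_ge0.
Qed.

Lemma vnorm_coord k (u : 'cV[C]_k) j : cabs (u j 0) <= vnorm u.
Proof.
rewrite /vnorm -(ger0_norm (cabs_ge0 (u j 0))) -sqrtr_sqr ler_sqrt; last first.
  by apply: sumr_ge0 => i _; exact: sqr_ge0.
by rewrite (bigD1 j) //= lerDl; apply: sumr_ge0 => i _; exact: sqr_ge0.
Qed.

Lemma sqr_sum_ge (I : finType) (f : I -> R) : (forall i, 0 <= f i) ->
  \sum_i f i ^+ 2 <= (\sum_i f i) ^+ 2.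
Proof.
move=> f0.
rewrite expr2 mulr_suml; apply: ler_sum => i _; rewrite expr2 ler_wpM2l //.
by rewrite (bigD1 i) //= lerDl; apply: sumr_ge0.
Qed.

Lemma vnorm_le_sum k (u : 'cV[C]_k) : vnorm u <= \sum_i cabs (u i 0).
Proof.
rewrite /vnorm -(ger0_norm (sumr_ge0 _ (fun i _ => cabs_ge0 (u i 0)))).
rewrite -sqrtr_sqr ler_sqrt ?sqr_ge0 //; apply: sqr_sum_ge => i; exact: cabs_ge0.
Qed.


Lemma cabs1 : cabs (1 : C) = 1.
Proof. by rewrite -[1 : C]/(rC 1) cabs_rC normr1. Qed.

Lemma vnorm0 k : vnorm (0 : 'cV[C]_k) = 0.
Proof. by rewrite -(scale0r (0 : 'cV[C]_k)) vnormZ cabs0 mul0r. Qed.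

Lemma opnorm_le k (B : 'M[C]_k) K :
  (forall u : 'cV[C]_k, vnorm u <= 1 -> vnorm (B *m u) <= K) -> opnorm B <= K.
Proof.
move=> H; apply: ge_sup.
  by exists (vnorm (B *m 0)); exists 0; rewrite vnorm0 ler01.
by move=> r [u [u1 ->]]; exact: H.
Qed.

Lemma opnorm_ub k (B : 'M[C]_k) :
  has_ubound [set r | exists u : 'cV[C]_k, vnorm u <= 1 /\ r = vnorm (B *m u)].
Proof.
exists (\sum_i \sum_j cabs (B i j)) => r [u [u1 ->]]; rewrite /=.

apply: le_trans (vnorm_le_sum _ _) _; apply: ler_sum => i _.
rewrite mxE; apply: le_trans (cabs_sum _ _ _ _) _; apply: ler_sum => j _.
rewrite cabsM -[X in _ <= X]mulr1 ler_wpM2l ?cabs_ge0 //.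
exact: le_trans (vnorm_coord _ _ _) u1.
Qed.

Lemma opnorm_ge k (B : 'M[C]_k) u : vnorm u <= 1 -> vnorm (B *m u) <= opnorm B.
Proof. move=> u1; apply: ub_le_sup; [exact: opnorm_ub | by exists u]. Qed.

Lemma vnorm_delta k (i : 'I_k) : vnorm (delta_mx i 0 : 'cV[C]_k) = 1.
Proof.
rewrite /vnorm (bigD1 i) //= big1 ?addr0.
  by rewrite mxE !eqxx /= cabs1 expr1n sqrtr1.
by move=> j /negbTE ji; rewrite mxE ji /= cabs0 expr0n.
Qed.

Lemma opnorm_diag k (B : 'M[C]_k) i : cabs (B i i) <= opnorm B.
Proof.
have u1 : vnorm (delta_mx i 0 : 'cV[C]_k) <= 1 by rewrite vnorm_delta.
have H := opnorm_ge _ B _ u1; rewrite -colE in H.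
apply: le_trans H; have := vnorm_coord _ (col i B) i; by rewrite mxE.
Qed.

Lemma opnorm_ge0 k (B : 'M[C]_k) : 0 <= opnorm B.
Proof. apply: le_trans (opnorm_ge _ B 0 _); rewrite ?vnorm0 ?ler01 //; exact: vnorm_ge0. Qed.

Lemma trace_le k (B : 'M[C]_k) : cabs (\tr B) <= k%:R * opnorm B.
Proof.
apply: le_trans (cabs_sum _ _ _ _) _.
apply: le_trans (ler_sum _ (fun i _ => opnorm_diag _ B i)) _.
by rewrite sumr_const card_ord mulr_natl.
Qed.

Lemma scal_opnorm_le k (c : C) : opnorm (c%:M : 'M[C]_k) <= cabs c.
Proof.
apply: opnorm_le => u u1; rewrite mul_scalar_mx vnormZ.
by rewrite -[X in _ <= X]mulr1 ler_wpM2l ?cabs_ge0.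
Qed.


Variables (n : nat) (m : 'I_n.+1 -> nat).
Local Notation A := (alg R m).

Definition sc (c : C) : A := alg_scale c (alg_one R m).

Lemma scE c k : sc c k = c%:M.
Proof. by rewrite /sc /alg_scale /alg_one scale_scalar_mx mulr1. Qed.

Lemma alg_norm_le (a : A) K : 0 <= K -> (forall k, opnorm (a k) <= K) -> alg_norm a <= K.
Proof. move=> K0 H; apply: bigmax_le => // k _; exact: H. Qed.

Lemma opnorm_alg (a : A) k : opnorm (a k) <= alg_norm a.
Proof. exact: (le_bigmax _ (fun k => opnorm (a k))). Qed.

Lemma alg_norm_ge0 (a : A) : 0 <= alg_norm a.
Proof. apply: le_trans (opnorm_alg a ord0); exact: opnorm_ge0. Qed.

Lemma alg_norm_sc c : alg_norm (sc c) <= cabs c.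
Proof. apply: alg_norm_le; first exact: cabs_ge0. by move=> k; rewrite scE; exact: scal_opnorm_le. Qed.

Lemma alg_sub_sc c c' : alg_sub (sc c) (sc c') = sc (c - c').
Proof. apply: functional_extensionality_dep => k; by rewrite /alg_sub !scE raddfB. Qed.

Lemma alg_adj_sc r : alg_adj (sc (rC r)) = sc (rC r).
Proof.
apply: functional_extensionality_dep => k.
rewrite /alg_adj !scE.
have -> : map_mx conjc ((rC r)%:M : 'M[C]_(m k)) = (conjc (rC r))%:M.
  exact: (map_scalar_mx conjc).
by rewrite tr_scalar_mx rCE conjc_real.
Qed.

Lemma alg_mul_sc c c' : alg_mul (sc c) (sc c') = sc (c * c').
Proof. apply: functional_extensionality_dep => k; by rewrite /alg_mul !scE mul_scalar_mx scale_scalar_mx. Qed.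

Lemma alg_one_sc : alg_one R m = sc 1.
Proof. apply: functional_extensionality_dep => k; by rewrite scE. Qed.

Lemma alg_add_sc c c' : alg_add (sc c) (sc c') = sc (c + c').
Proof. apply: functional_extensionality_dep => k; by rewrite /alg_add !scE raddfD. Qed.

Lemma alg_scale_sc c c' : alg_scale c (sc c') = sc (c * c').
Proof. apply: functional_extensionality_dep => k; by rewrite /alg_scale !scE scale_scalar_mx. Qed.

Variable v : 'I_n.+1 -> R.
Hypothesis m0 : forall k, (0 < m k)%N.
Hypothesis v0 : forall k, 0 <= v k <= 1.
Hypothesis v1 : \sum_k v k = 1.

Lemma trv_sc c : trv v (sc c) = c.
Proof.
rewrite /trv.
have Hk k : rC (v k / (m k)%:R) * \tr (sc c k) = rC (v k) * c.
  rewrite scE mxtrace_scalar mulrnAr -mulr_natr mulrAC !rCE.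
  rewrite -(rmorph_nat (real_complex R)) -rmorphM /= divfK // pnatr_eq0 -lt0n; exact: m0.
under eq_bigr => k _ do rewrite Hk rCE.
by rewrite -mulr_suml -rmorph_sum /= v1 mul1r.
Qed.

Lemma trv_sub (a b : A) : trv v (alg_sub a b) = trv v a - trv v b.
Proof.
rewrite /trv -sumrB; apply: eq_bigr => k _; by rewrite /alg_sub raddfB /= mulrBr.
Qed.

Lemma trv_le (a : A) : cabs (trv v a) <= alg_norm a.
Proof.
apply: le_trans (cabs_sum _ _ _ _) _.
have vk k : 0 <= v k by case/andP: (v0 k).
apply: le_trans (_ : \sum_k v k * alg_norm a <= _); last by rewrite -mulr_suml v1 mul1r.
apply: ler_sum => k _; rewrite cabsM cabs_rC ger0_norm ?divr_ge0 ?ler0n //.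
apply: le_trans (ler_wpM2l (divr_ge0 (vk k) (ler0n _ _)) (trace_le _ (a k))) _.
rewrite mulrA divfK ?pnatr_eq0 -?lt0n ?m0 //; apply: ler_wpM2l => //; exact: opnorm_alg.
Qed.

End H.

Section Sq.
Variable R : realType.

Lemma sqrt_diff (u w : R) : 0 <= u -> 0 <= w ->
  `|Num.sqrt u - Num.sqrt w| <= Num.sqrt `|u - w|.
Proof.
have key a b : 0 <= b -> b <= a -> `|Num.sqrt a - Num.sqrt b| <= Num.sqrt `|a - b|.
  move=> b0 ba; have a0 : 0 <= a by exact: le_trans ba.
  rewrite ger0_norm ?subr_ge0 ?ler_wsqrtr // ger0_norm ?subr_ge0 //.
  rewrite lerBlDr -(ger0_norm (addr_ge0 (sqrtr_ge0 (a - b)) (sqrtr_ge0 b))).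
  rewrite -sqrtr_sqr ler_sqrt ?sqr_ge0 // sqrrD !sqr_sqrtr ?subr_ge0 //.
  rewrite addrAC subrK lerDl; apply: mulrn_wge0; apply: mulr_ge0; exact: sqrtr_ge0.
move=> u0 w0; case: (leP w u) => wu; first exact: key.
by rewrite distrC [`|u - w|]distrC; apply: key => //; exact: ltW.
Qed.

Variables (X : Type) (d : X -> X -> R).
Hypothesis hd : is_metric d.

Lemma d_ge0 x y : 0 <= d x y. Proof. by case: hd. Qed.
Lemma d_sym x y : d x y = d y x. Proof. by case: hd. Qed.
Lemma d_tri x y z : d x z <= d x y + d y z. Proof. by case: hd. Qed.
Lemma d_xx x : d x x = 0. Proof. by case: hd => _ H _ _; apply/H. Qed.
Lemma d_eq0 x y : d x y = 0 -> x = y. Proof. by case: hd => _ H _ _; move/H. Qed.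

Lemma d_bounded : metric_compact d -> exists B, forall x y, d x y <= B.
Proof.
move=> hc.
have Hop : forall x0, metric_open d (fun y : X => d x0 y < 1).
  move=> x0 y /= Hy; exists (1 - d x0 y); first by rewrite subr_gt0.
  move=> z Hz; apply: le_lt_trans (d_tri x0 y z) _; by rewrite -ltrBrDl.
have Hcov : forall x, exists i, (fun y : X => d i y < 1) x.
  by move=> x; exists x; rewrite /= d_xx ltr01.
have [k [f Hf]] := hc X (fun x0 => (fun y : X => d x0 y < 1)) Hop Hcov.
exists (2 + \sum_i \sum_j d (f i) (f j)) => x y.
have [i Hi] := Hf x; have [j Hj] := Hf y.
rewrite /= in Hi Hj.
have h1 : d x (f i) <= 1 by rewrite d_sym; exact: ltW.
have h2 : d (f j) y <= 1 by exact: ltW.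
have h3 : d (f i) (f j) <= \sum_i \sum_j d (f i) (f j).
  apply: (@le_trans _ _ (\sum_j d (f i) (f j))).
    by rewrite (bigD1 j) //= lerDl; apply: sumr_ge0 => l _; exact: d_ge0.
  rewrite [X in _ <= X](bigD1 i) //= lerDl; apply: sumr_ge0 => l _; apply: sumr_ge0 => l' _; exact: d_ge0.
have h4 := d_tri x (f i) y; have h5 := d_tri (f i) (f j) y.
lra.
Qed.

Lemma diam_ub : metric_compact d ->
  has_ubound [set r | exists x y, r = d x y].
Proof. by move=> /d_bounded [B HB]; exists B => r [x [y ->]]; exact: HB. Qed.

Lemma d_le_diam : metric_compact d -> forall x y, d x y <= diam d.
Proof. move=> hc x y; apply: ub_le_sup; [exact: diam_ub | by exists x, y]. Qed.

Definition scont (g : X -> R) := forall x (e : R), 0 < e -> exists2 del : R, 0 < del &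
    forall y, d x y < del -> `|g x - g y| < e.

Lemma scont_lin (x0 : X) (c b : R) : scont (fun z => c * d x0 z + b).
Proof.
move=> x e e0; exists (e / (`|c| + 1)).
  by rewrite divr_gt0 // ltr_wpDl.
move=> y Hy; rewrite opprD addrACA subrr addr0 -mulrBr normrM.
have H1 : `|d x0 x - d x0 y| <= d x y.
  have t1 := d_tri x0 x y; have t2 := d_tri x0 y x; rewrite (d_sym y x) in t2.
  rewrite ler_norml; apply/andP; split; lra.
apply: le_lt_trans (ler_wpM2l (normr_ge0 c) H1) _.
apply: le_lt_trans (_ : (`|c| + 1) * d x y < _).
  by rewrite ler_wpM2r ?d_ge0 // lerDl.
by rewrite mulrC -ltr_pdivlMr // ltr_wpDl.
Qed.

Lemma scont_sqrt (g : X -> R) : scont g -> (forall z, 0 <= g z) ->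
  scont (fun z => Num.sqrt (g z)).
Proof.
move=> hg g0 x e e0; have [del del0 Hd] := hg x (e ^+ 2) (exprn_gt0 2 e0).
exists del => // y /Hd H; apply: le_lt_trans (sqrt_diff _ _ (g0 x) (g0 y)) _.
have e2 : e = Num.sqrt (e ^+ 2) by rewrite sqrtr_sqr ger0_norm // ltW.
by rewrite [X in _ < X]e2 ltr_sqrt ?exprn_gt0.
Qed.

Variables (n : nat) (m : 'I_n.+1 -> nat).

Lemma cont_sc (g : X -> R) : scont g -> cont d (fun z => @sc R n m (rC (g z))).
Proof.
move=> hg x e e0; have [del del0 H] := hg x e e0; exists del => // y Hy; have {}Hy := H y Hy.
rewrite alg_sub_sc; apply: le_lt_trans (alg_norm_sc _ _ _ _) _.
by rewrite !rCE -rmorphB /= -rCE cabs_rC.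
Qed.

End Sq.

Arguments d_ge0 {R X d}. Arguments d_sym {R X d}. Arguments d_tri {R X d}.
Arguments d_xx {R X d}. Arguments d_eq0 {R X d}. Arguments d_le_diam {R X d}.
Arguments d_bounded {R X d}.
Arguments scont {R X}. Arguments scont_lin {R X d}. Arguments scont_sqrt {R X d}.
Arguments cont_sc {R X d n m}.
Arguments trv_le {R n m v}. Arguments trv_sc {R n m v}. Arguments trv_sub {R n m v}.
Arguments alg_norm_sc {R n m}. Arguments alg_sub_sc {R n m}. Arguments alg_adj_sc {R n m}.
Arguments alg_mul_sc {R n m}. Arguments alg_add_sc {R n m}. Arguments alg_scale_sc {R n m}.
Arguments alg_one_sc {R n m}. Arguments scE {R n m}. Arguments opnorm_alg {R n m}.

Section Main.
Variables (R : realType) (X : Type) (d : X -> X -> R)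
  (n : nat) (m : 'I_n.+1 -> nat) (nn : alg R m -> R) (M N : R)
  (v : 'I_n.+1 -> R).
Hypotheses (hd : is_metric d) (hc : metric_compact d) (hm : forall k, (0 < m k)%N)
  (hnn : is_alg_norm nn) (M0 : 0 < M) (N0 : 0 < N)
  (hMN : forall a, M * nn a <= alg_norm a /\ alg_norm a <= N * nn a)
  (hv : forall k, 0 <= v k <= 1) (hv1 : \sum_k v k = 1).
Variables (x y : X).
Local Notation A := (alg R m).
Local Notation sc := (sc R n m).

Lemma nn_one : nn (alg_one R m) <= M^-1.
Proof.
rewrite -[M^-1]mulr1 ler_pdivlMl //; apply: le_trans (proj1 (hMN _)) _.
rewrite alg_one_sc; apply: le_trans (alg_norm_sc _) _; by rewrite cabs1.
Qed.

Lemma nn_sc r : nn (sc (rC r)) = `|r| * nn (alg_one R m).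
Proof. by case: hnn => _ _ H _; rewrite /sc H. Qed.

Definition ac (c : R) : X -> A := fun z => sc (rC (c * d x z)).

Lemma scont_ac c : scont d (fun z => c * d x z).
Proof.
have := scont_lin hd x c 0.
by rewrite (_ : (fun z => c * d x z + 0) = (fun z => c * d x z)) // ; apply: funext => z; rewrite addr0.
Qed.

Lemma cont_ac c : cont d (ac c).
Proof. exact: cont_sc (scont_ac c). Qed.

Lemma lipc_ac c : 0 <= c <= M -> (lipc d nn (ac c) <= 1)%E.
Proof.
case/andP=> c0 cM; apply: ge_ereal_sup => r [z [w [zw ->]]].
rewrite lee_fin /ac alg_sub_sc !rCE -rmorphB /= -rCE nn_sc.
have dzw : 0 < d z w.
  by rewrite lt_def d_ge0 // andbT; apply/eqP => /(d_eq0 hd).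
rewrite ler_pdivrMr // mul1r -mulrBr normrM (ger0_norm c0).
have H1 : `|d x z - d x w| <= d z w.
  have t1 := d_tri hd x z w; have t2 := d_tri hd x w z; rewrite (d_sym hd w z) in t2.
  rewrite ler_norml; apply/andP; split; lra.
have H2 : c * nn (alg_one R m) <= 1.
  apply: le_trans (ler_wpM2l c0 nn_one) _; by rewrite ler_pdivrMr // mul1r.
have nn0 : 0 <= nn (alg_one R m) by case: hnn.
rewrite mulrAC; apply: le_trans (ler_wpM2l (mulr_ge0 c0 nn0) H1) _.
by rewrite ler_piMl // d_ge0.
Qed.

Lemma mk_lower L c : 0 <= c -> (L (ac c) <= 1)%E ->
  ((c * d x y)%:E <= mk d L (Delta (trv v) x) (Delta (trv v) y))%E.
Proof.
move=> c0 HL; apply: ereal_sup_ubound; exists (ac c); split => //.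
- exact: cont_ac.
- by move=> z; rewrite alg_adj_sc.
- rewrite /Delta /ac !trv_sc // d_xx // mulr0 !rCE -rmorphB /= -rCE cabs_rC.
  by rewrite sub0r normrN ger0_norm // mulr_ge0 // d_ge0.
Qed.

Lemma mk_upper L : (forall a, (lipc d nn a <= L a)%E) ->
  (mk d L (Delta (trv v) x) (Delta (trv v) y) <= (N * d x y)%:E)%E.
Proof.
move=> HL; apply: ge_ereal_sup => r [a [ca sa La ->]].
rewrite lee_fin /Delta -trv_sub.
have [<-|xy] := pselect (x = y).
  rewrite d_xx // mulr0; apply: le_trans (trv_le hm hv hv1 _) _.
  apply: le_trans (proj2 (hMN _)) _.
  have -> : alg_sub (a x) (a x) = alg_scale (rC 0) (a x).
    by apply: functional_extensionality_dep => k; rewrite /alg_sub /alg_scale subrr scale0r.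
  by case: hnn => _ _ H _; rewrite H normr0 mul0r mulr0.
apply: le_trans (trv_le hm hv hv1 _) _.
apply: le_trans (proj2 (hMN _)) _; rewrite ler_pM2l //.
have dxy : 0 < d x y.
  by rewrite lt_def d_ge0 // andbT; apply/eqP => /(d_eq0 hd).
have : (lipc d nn a <= 1)%E by exact: le_trans (HL a) La.
move/ereal_supP => /(_ ((nn (alg_sub (a x) (a y)) / d x y)%:E)) H.
have := H _; rewrite lee_fin ler_pdivrMr // mul1r; apply.
by exists x, y.
Qed.

Lemma supnorm_le (f : X -> A) K : (forall z, alg_norm (f z) <= K) -> (supnorm f <= K%:E)%E.
Proof. by move=> H; apply: ge_ereal_sup => r [z ->]; rewrite lee_fin. Qed.


Lemma scont_const (b : R) : scont d (fun _ : X => b).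
Proof. by move=> z e e0; exists 1 => // w _; rewrite subrr normr0. Qed.

Lemma mu_ac (mu : (X -> A) -> R[i]) c : is_state d mu -> 0 <= c ->
  exists t, mu (ac c) = rC t /\ 0 <= t <= c * diam d.
Proof.
case=> madd mscale mpos mone c0.
set D := diam d.
have dD z : d x z <= D by exact: d_le_diam.
have g0 z : 0 <= c * d x z by rewrite mulr_ge0 // d_ge0.
have g1 z : 0 <= c * D - c * d x z by rewrite subr_ge0 ler_wpM2l.
have P1 : 0 <= mu (ac c).
  set b := fun z => sc (rC (Num.sqrt (c * d x z))).
  have -> : ac c = (fun z => alg_mul (alg_adj (b z)) (b z)).
    apply: funext => z; rewrite /b alg_adj_sc alg_mul_sc !rCE -rmorphM /=.
    by rewrite -expr2 sqr_sqrtr.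
  apply: mpos; apply: cont_sc; apply: scont_sqrt => //; exact: scont_ac.
have cone : cont d (fun _ : X => alg_one R m).
  rewrite alg_one_sc; exact: (cont_sc _ (scont_const 1)).
have P2 : 0 <= rC (c * D) - mu (ac c).
  set b := fun z => sc (rC (Num.sqrt (c * D - c * d x z))).
  have E1 : (fun z => alg_mul (alg_adj (b z)) (b z)) =
       (fun z => alg_add (alg_scale (rC (c * D)) (alg_one R m)) (alg_scale (-1) (ac c z))).
    apply: funext => z; rewrite /b /ac alg_adj_sc alg_mul_sc alg_scale_sc.
    rewrite -/(sc _) alg_add_sc !rCE -rmorphM /= -expr2 sqr_sqrtr //.
    by rewrite mulN1r rmorphB.
  have sb : scont d (fun z => c * D - c * d x z).
    have := scont_lin hd x (- c) (c * D).
    have -> // : (fun z => - c * d x z + c * D) = (fun z => c * D - c * d x z).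
    by apply: funext => z; rewrite mulNr addrC.
  have cb : cont d b := cont_sc _ (scont_sqrt _ sb g1).
  have c1 : cont d (fun _ : X => alg_scale (rC (c * D)) (alg_one R m)).
    exact: (cont_sc _ (scont_const (c * D))).
  have sm : scont d (fun z => -1 * (c * d x z)).
    have := scont_lin hd x (- c) 0.
    have -> // : (fun z => - c * d x z + 0) = (fun z => -1 * (c * d x z)).
    by apply: funext => z; rewrite addr0 mulN1r mulNr.
  have c2 : cont d (fun z => alg_scale (-1) (ac c z)).
    have -> : (fun z => alg_scale (-1) (ac c z)) = (fun z => sc (rC (-1 * (c * d x z)))).
      by apply: funext => z; rewrite /ac alg_scale_sc !rCE !rmorphM rmorphN1.
    exact: (cont_sc _ sm).
  have := mpos b cb; rewrite E1 madd //.
  rewrite mscale; last exact: cone.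
  rewrite mscale; last exact: cont_ac.
  by rewrite mone mulr1 mulN1r.
have [t ht] : exists t, mu (ac c) = rC t.
  exists (complex.Re (mu (ac c))).
  move: P1; rewrite lecE => /andP [/eqP H _].
  by case: (mu (ac c)) H => a b /= ->.
rewrite ht !rCE ler0c in P1; rewrite ht !rCE -rmorphB /= ler0c subr_ge0 in P2.
by exists t; rewrite ht P1 P2.
Qed.


Lemma LCX_le : (L_CX d nn (ac M) <= 1)%E.
Proof.
have HM : 0 <= M <= M by rewrite ltW //= lexx.
rewrite /L_CX ge_max lipc_ac //=.
apply: (@le_trans _ _ (supnorm (fun z => alg_sub (ac M z) (ac M z)))).
  apply: ereal_inf_lbound; exists (ac M); split => //; first exact: cont_ac.
  by move=> z; exists (rC (M * d x z)).
apply: supnorm_le => z; rewrite /ac alg_sub_sc subrr.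
by apply: le_trans (alg_norm_sc _) _; rewrite cabs0 ler01.
Qed.

Lemma ac_le c z : 0 <= c -> 0 <= c * d x z <= c * diam d.
Proof. by move=> c0; rewrite mulr_ge0 ?d_ge0 //= ler_wpM2l // d_le_diam. Qed.

Lemma LC_le c : 0 <= c <= M -> c * diam d <= 1 -> (L_C d nn (ac c) <= 1)%E.
Proof.
move=> cM cD; rewrite /L_C ge_max lipc_ac //=.
have c0 : 0 <= c by case/andP: cM.
apply: (@le_trans _ _ (supnorm (fun z => alg_sub (ac c z) (sc 0)))).
  by apply: ereal_inf_lbound; exists 0.
apply: supnorm_le => z; rewrite /ac alg_sub_sc subr0.
apply: le_trans (alg_norm_sc _) _; rewrite cabs_rC.
case/andP: (ac_le c z c0) => h1 h2; rewrite ger0_norm //; exact: le_trans h2 cD.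
Qed.

Lemma Lmu_le mu c : is_state d mu -> 0 <= c <= M -> c * diam d <= 1 ->
  (L_mu d mu nn (ac c) <= 1)%E.
Proof.
move=> hmu cM cD; rewrite /L_mu ge_max lipc_ac //=.
have c0 : 0 <= c by case/andP: cM.
have [t [ht /andP [t0 t1]]] := mu_ac mu c hmu c0.
apply: supnorm_le => z; rewrite ht -/(sc _) /ac alg_sub_sc.
apply: le_trans (alg_norm_sc _) _; rewrite !rCE -rmorphB /= -rCE cabs_rC.
case/andP: (ac_le c z c0) => h1 h2; apply: le_trans cD.
rewrite ler_norml; apply/andP; split; lra.
Qed.

Lemma main_res :
  let D := diam d in
  let Dx := Delta (trv v) x in
  let Dy := Delta (trv v) y in
  ((M * d x y)%:E <= mk d (L_CX d nn) Dx Dy <= (N * d x y)%:E)%E /\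
  (M * D <= 1 ->
     ((M * d x y)%:E <= mk d (L_C d nn) Dx Dy <= (N * d x y)%:E)%E) /\
  (1 < M * D ->
     ((d x y / D)%:E <= mk d (L_C d nn) Dx Dy <= (N * d x y)%:E)%E) /\
  (forall mu : (X -> alg R m) -> R[i], is_state d mu ->
     (2 * M * D <= 1 ->
        ((M * d x y)%:E <= mk d (L_mu d mu nn) Dx Dy <= (N * d x y)%:E)%E) /\
     (1 < 2 * M * D ->
        ((d x y / (2 * D))%:E <= mk d (L_mu d mu nn) Dx Dy <= (N * d x y)%:E)%E)).
Proof.
move=> D Dx Dy.
have D0 : 0 <= D by rewrite -(d_xx hd x); exact: d_le_diam.
have M0' : 0 <= M <= M by rewrite ltW //=.
have upCX : (mk d (L_CX d nn) Dx Dy <= (N * d x y)%:E)%E.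
  by apply: mk_upper => a; rewrite /L_CX le_max lexx.
have upC : (mk d (L_C d nn) Dx Dy <= (N * d x y)%:E)%E.
  by apply: mk_upper => a; rewrite /L_C le_max lexx.
have upmu mu : (mk d (L_mu d mu nn) Dx Dy <= (N * d x y)%:E)%E.
  by apply: mk_upper => a; rewrite /L_mu le_max lexx.
have Dpos : forall K, 0 < K -> 1 < K * D -> 0 < D.
  move=> K K0 KD; rewrite lt_def D0 andbT; apply/eqP => D00.
  by move: KD; rewrite D00 mulr0 ltr10.
split; first by rewrite upCX andbT; apply: mk_lower; [exact: ltW | exact: LCX_le].
split; first by move=> MD; rewrite upC andbT; apply: mk_lower; [exact: ltW | exact: LC_le].
split.
  move=> MD; rewrite upC andbT.
  have Dp := Dpos _ M0 MD.
  rewrite mulrC; apply: mk_lower; first by rewrite invr_ge0 ltW.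
  apply: LC_le; last by rewrite mulVf // gt_eqF.
  rewrite invr_ge0 ltW //= -[D^-1]mul1r ler_pdivrMr //; exact: ltW.
move=> mu hmu; split.
  move=> MD; rewrite upmu andbT; apply: mk_lower; first exact: ltW.
  apply: Lmu_le => //; apply: le_trans MD.
  have MD0 : 0 <= M * D by rewrite mulr_ge0 // ltW.
  rewrite -mulrA; set t := M * D; rewrite -/t in MD0; lra.
move=> MD; rewrite upmu andbT.
have Dp : 0 < D by apply: (Dpos (2 * M)) => //; rewrite mulr_gt0.
have D2 : 0 < 2 * D by rewrite mulr_gt0.
rewrite mulrC; apply: mk_lower; first by rewrite invr_ge0 ltW.
apply: Lmu_le => //.
  rewrite invr_ge0 ltW //= -[(2 * D)^-1]mul1r ler_pdivrMr //.
  rewrite mulrCA mulrA; exact: ltW.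
rewrite invfM -mulrA mulVf ?gt_eqF // mulr1; lra.
Qed.

End Main.

Theorem theorem3p7 (R : realType) (X : Type) (d : X -> X -> R)
  (n : nat) (m : 'I_n.+1 -> nat) (nn : alg R m -> R) (M N : R)
  (v : 'I_n.+1 -> R) :
  is_metric d -> metric_compact d ->
  (forall k, (0 < m k)%N) ->
  is_alg_norm nn -> 0 < M -> 0 < N ->
  (forall a, M * nn a <= alg_norm a /\ alg_norm a <= N * nn a) ->
  (forall k, 0 <= v k <= 1) -> \sum_k v k = 1 ->
  forall x y : X,
  let D := diam d in
  let Dx := Delta (trv v) x in
  let Dy := Delta (trv v) y in
  (* (1) q = C(X) *)
  ((M * d x y)%:E <= mk d (L_CX d nn) Dx Dy <= (N * d x y)%:E)%E /\
  (* (2) q = C *)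
  (M * D <= 1 ->
     ((M * d x y)%:E <= mk d (L_C d nn) Dx Dy <= (N * d x y)%:E)%E) /\
  (1 < M * D ->
     ((d x y / D)%:E <= mk d (L_C d nn) Dx Dy <= (N * d x y)%:E)%E) /\
  (* (3) q = mu, a state of C(X,A) *)
  (forall mu : (X -> alg R m) -> R[i], is_state d mu ->
     (2 * M * D <= 1 ->
        ((M * d x y)%:E <= mk d (L_mu d mu nn) Dx Dy <= (N * d x y)%:E)%E) /\
     (1 < 2 * M * D ->
        ((d x y / (2 * D))%:E <= mk d (L_mu d mu nn) Dx Dy <= (N * d x y)%:E)%E)).
Proof.
move=> hd hc hm hnn M0 N0 hMN hv hv1 x y.
exact: main_res.
Qed.
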